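(* Let $k\geq 1$, $t\geq k$ and $\frac{1}{2}\leq p\leq 1$ be real numbers. Then for every real $x$ with $0\leq x\leq \frac{1}{2}$, $$(1+t)^x\geq p^x+\frac{(1+k)^x-p^x}{k^x}\,t^x .$$ *)

(* Defs.v *)
From Stdlib Require Import Reals.

(* Main.v *)
Require Import Defs.
From Stdlib Require Import Reals.
From Coquelicot Require Import Coquelicot.
From Stdlib Require Import Lra Psatz.
Open Scope R_scope.

Lemma sign_lem a p c : 0 <= a <= 1/2 -> 1/2 <= p <= 1 -> 0 < c <= 1 ->
  exp (a*ln (1+c))/(1+c) <= exp (a*ln p)*exp (a*ln c)/c.
Proof.
  intros Ha Hp Hc.
  assert (E1 : exp (a*ln (1+c))/(1+c) = exp (a*ln (1+c) - ln (1+c))).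
  { unfold Rminus. rewrite exp_plus, exp_Ropp, exp_ln by lra. reflexivity. }
  assert (E2 : exp (a*ln p)*exp (a*ln c)/c = exp (a*ln p + a*ln c - ln c)).
  { unfold Rminus. rewrite !exp_plus, exp_Ropp, exp_ln by lra. reflexivity. }
  rewrite E1, E2.
  enough (HH : a*ln (1+c) - ln (1+c) <= a*ln p + a*ln c - ln c).
  { destruct HH as [HH|HH]; [left; apply exp_increasing; exact HH|right; rewrite HH; reflexivity]. }
  assert (L1 : ln 2 <= ln (1+c) - ln c).
  { rewrite <- ln_div by lra. apply ln_le. lra.
    apply (Rmult_le_reg_r c); [lra|]. unfold Rdiv. rewrite Rmult_assoc, Rinv_l by lra. lra. }
  assert (L2 : - ln 2 <= ln p).
  { rewrite <- ln_Rinv by lra. apply ln_le; lra. }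
  assert (L3 : 0 < ln 2) by (rewrite <- ln_1; apply ln_increasing; lra).
  nra.
Qed.

Definition G a p s := exp (a * ln (1+s)) - exp (a * ln p) * exp (a * ln s).

Lemma G_mono a p s s0 : 0 <= a <= 1/2 -> 1/2 <= p <= 1 -> 0 < s <= s0 -> s0 <= 1 ->
  G a p s0 <= G a p s.
Proof.
  intros Ha Hp Hs Hs0.
  destruct (Req_dec s s0) as [->|Hne]; [lra|].
  destruct (MVT_cor2 (G a p)
    (fun c => a*(exp (a*ln (1+c))/(1+c) - exp (a*ln p)*exp (a*ln c)/c)) s s0)
    as [c [Hc1 Hc2]]; [lra| |].
  { intros c Hc. apply is_derive_Reals. unfold G. auto_derive. all: try lra. all: try (field; lra). }
  assert (Hc : 0 < c <= 1) by (split; lra). pose proof (sign_lem a p c Ha Hp Hc) as HS.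
  set (D := exp (a * ln (1 + c)) / (1 + c) - exp (a * ln p) * exp (a * ln c) / c) in *.
  assert (HD : D <= 0) by (unfold D; lra).
  assert (0 <= a * D * (s - s0)).
  { replace (a * D * (s - s0)) with (a * ((-D) * (s0 - s))) by ring.
    apply Rmult_le_pos; [lra|]. apply Rmult_le_pos; lra. }
  lra.
Qed.

Theorem lemma1 (k t p x : R)
  (hk : 1 <= k) (ht : k <= t) (hp1 : 1/2 <= p) (hp2 : p <= 1)
  (hx1 : 0 <= x) (hx2 : x <= 1/2) :
  Rpower (1 + t) x >=
    Rpower p x + (Rpower (1 + k) x - Rpower p x) / Rpower k x * Rpower t x.
Proof.
  assert (H := G_mono x p (/t) (/k) ltac:(lra) ltac:(lra)).
  assert (Hs : 0 < /t <= /k). { split. apply Rinv_0_lt_compat; lra. apply Rinv_le_contravar; lra. }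
  assert (Hk1 : /k <= 1). { rewrite <- Rinv_1. apply Rinv_le_contravar; lra. }
  specialize (H Hs Hk1).
  assert (R1 : forall u, 0 < u -> Rpower u x * G x p (/u) = Rpower (1+u) x - Rpower p x).
  { intros u Hu. unfold G. rewrite Rmult_minus_distr_l.
    change (exp (x * ln (1 + / u))) with (Rpower (1 + /u) x).
    change (exp (x * ln p)) with (Rpower p x).
    change (exp (x * ln (/ u))) with (Rpower (/u) x).
    assert (0 < /u) by (apply Rinv_0_lt_compat; lra).
    rewrite Rpower_mult_distr by lra.
    replace (Rpower u x * (Rpower p x * Rpower (/ u) x)) with
      (Rpower p x * (Rpower u x * Rpower (/ u) x)) by ring.
    rewrite Rpower_mult_distr by lra.
    replace (u * (1 + /u)) with (1+u) by (field; lra).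
    replace (u * /u) with 1 by (field; lra).
    unfold Rpower at 3. rewrite ln_1, Rmult_0_r, exp_0. ring. }
  assert (Pt : 0 < Rpower t x) by (unfold Rpower; apply exp_pos).
  assert (Pk : 0 < Rpower k x) by (unfold Rpower; apply exp_pos).
  assert (Ek : G x p (/k) = (Rpower (1 + k) x - Rpower p x) / Rpower k x).
  { rewrite <- R1 by lra. field. lra. }
  rewrite <- Ek.
  pose proof (R1 t ltac:(lra)).
  assert (Rpower t x * G x p (/k) <= Rpower t x * G x p (/t)) by (apply Rmult_le_compat_l; lra).
  lra.
Qed.
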